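(* Fix $1<p<\infty$. Let $X$ and $Y$ be Banach spaces such that $X$ has the approximation property and $\mathcal A(X,Y)\subsetneq\mathcal K(X,Y)$. Let $Z_p:=\big(\bigoplus_{j=0}^\infty X_j\big)_{\ell^p}$ with $X_0=Y$ and $X_j=X$ for $j\ge1$, and for $\emptyset\neq A\subsetneq\mathbb N$ let \[ \mathcal I_A:=\{S\in\mathcal K(Z_p): P_0SJ_0\in\mathcal A(Y),\ P_0SJ_k\in\mathcal A(X,Y)\text{ for all }k\in A\}. \] Suppose $\emptyset\neq A,B\subsetneq\mathbb N$ and there is a permutation $\sigma:\mathbb N\to\mathbb N$ with $\sigma(A)=B$. Then $\mathcal I_A$ and $\mathcal I_B$ are isomorphic as Banach algebras. In particular this holds whenever $|A|=|B|\in\mathbb N\cup\{\infty\}$ and $|\mathbb N\setminus A|=|\mathbb N\setminus B|\in\mathbb N\cup\{\infty\}$.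
   Context: $\mathbb N=\{1,2,3,\ldots\}$; $|A|$ denotes cardinality. For Banach spaces $E,F$, $\mathcal K(E,F)$ denotes the compact operators and $\mathcal A(E,F)$ the operator-norm closure of the finite-rank operators $E\to F$; $\mathcal A(E)=\mathcal A(E,E)$. $P_m:Z_p\to X_m$ and $J_n:X_n\to Z_p$ ($m,n\ge0$) are the natural coordinate projections and inclusions. *)

(* Defs.v *)
From HB Require Import structures.
From mathcomp Require Import all_boot all_order all_algebra.
From mathcomp Require Import all_classical all_reals all_analysis.
Set Implicit Arguments. Unset Strict Implicit. Unset Printing Implicit Defensive.
Import Order.TTheory GRing.Theory Num.Theory.
Import numFieldNormedType.Exports.
Local Open Scope classical_set_scope.
Local Open Scope ring_scope.

Definition bdd_lin (R : realType) (E F : normedModType R) (f : E -> F) : Prop :=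
  (forall (a : R) (u v : E), f (a *: u + v) = a *: f u + f v) /\
  exists M : R, forall x : E, `|f x| <= M * `|x|.

Definition finite_rank (R : realType) (E F : normedModType R) (f : E -> F) : Prop :=
  exists (n : nat) (v : 'I_n -> F),
    forall x : E, exists c : 'I_n -> R, f x = \sum_(i < n) c i *: v i.

Definition approx_op (R : realType) (E F : normedModType R) (S : E -> F) : Prop :=
  bdd_lin S /\
  forall eps : R, 0 < eps -> exists T : E -> F,
    [/\ bdd_lin T, finite_rank T & forall x : E, `|S x - T x| <= eps * `|x|].

Definition compact_op (R : realType) (E F : normedModType R) (S : E -> F) : Prop :=
  bdd_lin S /\ compact (closure (S @` [set x : E | `|x| <= 1])).

Definition approx_property (R : realType) (E : normedModType R) : Prop :=
  forall K : set E, compact K -> forall eps : R, 0 < eps ->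
    exists T : E -> E, [/\ bdd_lin T, finite_rank T &
      forall x, K x -> `|T x - x| <= eps].

(* A point of Z_p is a pair (y, f) with y : Y the 0-th coordinate and
   f k : X the (k+1)-th coordinate, k = 0,1,2,... *)
Definition lp_carrier (R : realType) (X Y : normedModType R) := (Y * (nat -> X))%type.

Definition lp_mem (R : realType) (X Y : normedModType R) (p : R)
  (z : lp_carrier X Y) : Prop :=
  cvgn (series (fun k => `|z.2 k| `^ p)).

(* the l^p norm (meaningful on lp_mem points) *)
Definition lp_norm (R : realType) (X Y : normedModType R) (p : R)
  (z : lp_carrier X Y) : R :=
  (`|z.1| `^ p + limn (series (fun k => `|z.2 k| `^ p))) `^ p^-1.

Definition Zp (R : realType) (X Y : normedModType R) (p : R) : Type :=
  {z : lp_carrier X Y | lp_mem p z}.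

HB.instance Definition _ (R : realType) (X Y : normedModType R) (p : R) :=
  gen_eqMixin (Zp X Y p).
HB.instance Definition _ (R : realType) (X Y : normedModType R) (p : R) :=
  gen_choiceMixin (Zp X Y p).

Definition zval (R : realType) (X Y : normedModType R) (p : R) (z : Zp X Y p)
  : lp_carrier X Y := proj1_sig z.

Definition zdist (R : realType) (X Y : normedModType R) (p : R) (z w : Zp X Y p) : R :=
  lp_norm p (zval z - zval w).

Definition zopen (R : realType) (X Y : normedModType R) (p : R) (U : set (Zp X Y p))
  : Prop :=
  forall z, U z -> exists2 e : R, 0 < e & forall w, zdist z w < e -> U w.

Lemma zopenT (R : realType) (X Y : normedModType R) (p : R) : zopen (@setT (Zp X Y p)).
Proof. by move=> z _; exists 1 => //. Qed.

Lemma zopenI (R : realType) (X Y : normedModType R) (p : R) :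
  setI_closed (@zopen R X Y p).
Proof.
move=> U V oU oV z [/oU [e1 e1p h1] /oV [e2 e2p h2]].
exists (Num.min e1 e2); first by rewrite lt_min e1p e2p.
by move=> w; rewrite lt_min => /andP[w1 w2]; split; [exact: h1|exact: h2].
Qed.

Lemma zopen_bigU (R : realType) (X Y : normedModType R) (p : R) (I : Type)
  (f : I -> set (Zp X Y p)) : (forall i, zopen (f i)) -> zopen (\bigcup_i f i).
Proof.
move=> hf z [i _ fiz]; have [e ep h] := hf i z fiz.
by exists e => // w /h fw; exists i.
Qed.

HB.instance Definition _ (R : realType) (X Y : normedModType R) (p : R) :=
  @isOpenTopological.Build (Zp X Y p) (@zopen R X Y p) (@zopenT R X Y p)
    (@zopenI R X Y p) (@zopen_bigU R X Y p).

Lemma cvg_series_evzero (R : realType) (u : R ^nat) (N : nat) :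
  (forall j, (N <= j)%N -> u j = 0) -> cvgn (series u).
Proof.
move=> u0; apply: (is_cvg_near_cst (series u N)).
near=> n; have Nn : (N <= n)%N by near: n; exists N.
rewrite /series /= (@big_cat_nat _ _ _ N 0 n _ _ (leq0n N) Nn) /=.
rewrite [X in _ + X]big1_seq ?addr0 //.
by move=> j /andP[_]; rewrite mem_index_iota => /andP[Nj _]; exact: u0.
Unshelve. all: by end_near.
Qed.

Lemma lp_mem_J0 (R : realType) (X Y : normedModType R) (p : R) (hp : 1 < p) (y : Y) :
  lp_mem p ((y, fun _ => 0) : lp_carrier X Y).
Proof.
apply: (@cvg_series_evzero _ _ 0) => j _ /=.
by rewrite normr0 powR0 // gt_eqF // (lt_trans ltr01 hp).
Qed.

Lemma lp_mem_Jk (R : realType) (X Y : normedModType R) (p : R) (hp : 1 < p)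
  (k : nat) (x : X) :
  lp_mem p ((0, fun j => if j == k.-1 then x else 0) : lp_carrier X Y).
Proof.
apply: (@cvg_series_evzero _ _ k.+1) => j kj /=.
have -> : (j == k.-1) = false.
  by apply/negbTE; apply/eqP => jk; move: kj; rewrite jk; case: (k) => // k0; rewrite ltnNge leqnSn.
by rewrite normr0 powR0 // gt_eqF // (lt_trans ltr01 hp).
Qed.

Definition J0 (R : realType) (X Y : normedModType R) (p : R) (hp : 1 < p) (y : Y)
  : Zp X Y p := exist _ _ (@lp_mem_J0 R X Y p hp y).

Definition Jk (R : realType) (X Y : normedModType R) (p : R) (hp : 1 < p) (k : nat)
  (x : X) : Zp X Y p := exist _ _ (@lp_mem_Jk R X Y p hp k x).

Definition P0 (R : realType) (X Y : normedModType R) (p : R) (z : Zp X Y p) : Y :=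
  (zval z).1.

(* linearity is phrased without needing closure lemmas: whenever
   z3 = a z1 + z2 in the ambient vector space, S z3 = a S z1 + S z2 *)
Definition zbdd_lin (R : realType) (X Y : normedModType R) (p : R)
  (S : Zp X Y p -> Zp X Y p) : Prop :=
  (forall (a : R) (z1 z2 z3 : Zp X Y p), zval z3 = a *: zval z1 + zval z2 ->
      zval (S z3) = a *: zval (S z1) + zval (S z2)) /\
  exists M : R, forall z, lp_norm p (zval (S z)) <= M * lp_norm p (zval z).

Definition zcompact_op (R : realType) (X Y : normedModType R) (p : R)
  (S : Zp X Y p -> Zp X Y p) : Prop :=
  zbdd_lin S /\ compact (closure (S @` [set z | lp_norm p (zval z) <= 1])).

(* the ideal I_A (A a set of indices in N = {1,2,...}) *)
Definition I_ideal (R : realType) (X Y : normedModType R) (p : R) (hp : 1 < p)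
  (A : set nat) : set (Zp X Y p -> Zp X Y p) :=
  [set S | [/\ zcompact_op S,
     approx_op (fun y : Y => P0 (S (J0 X hp y))) &
     forall k, A k -> approx_op (fun x : X => P0 (S (Jk Y hp k x)))]].

(* isomorphism of Banach algebras between two subalgebras I, I' of B(Z_p):
   a bijection I -> I' that is linear, multiplicative, bounded, with bounded
   inverse (operator-norm bounds written out) *)
Definition banach_alg_iso (R : realType) (X Y : normedModType R) (p : R)
  (I I' : set (Zp X Y p -> Zp X Y p)) : Prop :=
  exists Phi : (Zp X Y p -> Zp X Y p) -> (Zp X Y p -> Zp X Y p),
  [/\ (forall S, I S -> I' (Phi S)),
      {in I &, injective Phi} /\ (forall T, I' T -> exists2 S, I S & Phi S = T),
      (forall (a : R) S1 S2 S3, I S1 -> I S2 -> I S3 ->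
        (forall z, zval (S3 z) = a *: zval (S1 z) + zval (S2 z)) ->
        forall z, zval (Phi S3 z) = a *: zval (Phi S1 z) + zval (Phi S2 z)),
      (forall S1 S2, I S1 -> I S2 -> Phi (S1 \o S2) = Phi S1 \o Phi S2) &
      exists2 C : R, 0 < C & forall S, I S -> forall M : R,
        ((forall z, lp_norm p (zval (S z)) <= M * lp_norm p (zval z)) ->
          forall z, lp_norm p (zval (Phi S z)) <= C * M * lp_norm p (zval z)) /\
        ((forall z, lp_norm p (zval (Phi S z)) <= M * lp_norm p (zval z)) ->
          forall z, lp_norm p (zval (S z)) <= C * M * lp_norm p (zval z))].

Definition Npos : set nat := [set k | (0 < k)%N].

(* Main.v *)
Require Import Defs.
From HB Require Import structures.
From mathcomp Require Import all_boot all_order all_algebra.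
From mathcomp Require Import all_classical all_reals all_analysis.
Import Order.TTheory GRing.Theory Num.Theory.
Import numFieldNormedType.Exports.
Local Open Scope classical_set_scope.
Local Open Scope ring_scope.
Local Open Scope card_scope.
Set Implicit Arguments. Unset Strict Implicit.
Lemma bound_img (t : nat -> nat) n : exists m, forall i, (i < n)%N -> (t i < m)%N.
Proof.
elim: n => [|n [m hm]]; first by exists 0%N.
exists (maxn m (t n).+1) => i; rewrite ltnS leq_eqVlt => /orP[/eqP->|/hm h].
  by rewrite leq_max leqnn orbT.
by rewrite leq_max h.
Qed.

Lemma series_perm_le (R : realType) (u : R ^nat) (t : nat -> nat) :
  (forall n, 0 <= u n) -> injective t ->
  forall n, exists m, series (u \o t) n <= series u m.
Proof.
move=> u0 tinj n; have [m hm] := bound_img t n; exists m.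
rewrite /series /= -(big_map t xpredT u).
have -> : \sum_(j <- map t (index_iota 0 n)) u j =
          \sum_(j <- index_iota 0 m | j \in map t (index_iota 0 n)) u j.
  rewrite -[RHS]big_filter; set r1 := map t _; set r2 := [seq _ <- _ | _].
  suff hp : perm_eq r1 r2 by rewrite (perm_big _ hp).
  apply: uniq_perm.
  - by rewrite (map_inj_uniq tinj) iota_uniq.
  - by rewrite filter_uniq // iota_uniq.
  move=> x; rewrite mem_filter; apply/idP/idP => [xin|/andP[//]].
  rewrite xin /=; move/mapP: xin => [i]; rewrite mem_index_iota => /andP[_ ilt] ->.
  by rewrite mem_index_iota leq0n hm.
rewrite big_mkcond /=; apply: ler_sum => j _; case: ifP => // _.
Qed.

Lemma cvg_perm_aux (R : realType) (s t : R ^nat) (l : R) :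
  nondecreasing_seq s -> nondecreasing_seq t ->
  (forall n, exists m, t n <= s m) -> (forall n, exists m, s n <= t m) ->
  s @ \oo --> l -> t @ \oo --> l.
Proof.
move=> snd tnd ts st sl.
have ls : limn s = l by apply: cvg_lim.
have sc : cvgn s by apply/cvg_ex; exists l.
have sle n : s n <= l by rewrite -ls; exact: nondecreasing_cvgn_le.
have tb : has_ubound (range t).
  exists l => _ [n _ <-]; have [m hm] := ts n; exact: le_trans hm (sle m).
have tc : cvgn t := nondecreasing_is_cvgn tnd tb.
suff -> : l = limn t by [].
apply/eqP; rewrite eq_le; apply/andP; split.
  rewrite -ls; apply: limr_le => //; apply: nearW => n.
  have [m hm] := st n; exact: le_trans hm (nondecreasing_cvgn_le tnd tc m).
apply: limr_le => //; apply: nearW => n.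
have [m hm] := ts n; exact: le_trans hm (sle m).
Qed.

Lemma series_perm_iff (R : realType) (u : R ^nat) (t t' : nat -> nat) :
  (forall n, 0 <= u n) -> cancel t t' -> cancel t' t ->
  forall l : R, (series u @ \oo --> l) <-> (series (u \o t) @ \oo --> l).
Proof.
move=> u0 c1 c2.
have ut0 : forall n, 0 <= (u \o t) n by move=> n; exact: u0.
have E : u = (u \o t) \o t' by apply/funext => n /=; rewrite c2.
have ndu : nondecreasing_seq (series u).
  by apply/nondecreasing_seqP => n; rewrite /series /= big_nat_recr //= lerDl u0.
have ndut : nondecreasing_seq (series (u \o t)).
  by apply/nondecreasing_seqP => n; rewrite /series /= big_nat_recr //= lerDl ut0.
have h1 := @series_perm_le R u t u0 (can_inj c1).
have h2 : forall n, exists m, series u n <= series (u \o t) m.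
  by rewrite {1}E; exact: (@series_perm_le R (u \o t) t' ut0 (can_inj c2)).
move=> l; split; first exact: cvg_perm_aux.
exact: cvg_perm_aux.
Qed.

Lemma limn_series_perm (R : realType) (u : R ^nat) (t t' : nat -> nat) :
  (forall n, 0 <= u n) -> cancel t t' -> cancel t' t ->
  limn (series u) = limn (series (u \o t)) /\ (cvgn (series u) <-> cvgn (series (u \o t))).
Proof.
move=> u0 c1 c2.
have h := @series_perm_iff R u t t' u0 c1 c2.
have E : (fun l : R => series u @ \oo --> l) = (fun l : R => series (u \o t) @ \oo --> l).
  by apply/funext => l; apply/propext; exact: h.
have L : limn (series u) = limn (series (u \o t)).
  by rewrite /lim /lim_in E.
split => //; rewrite L; exact: h.
Qed.

Definition pc (R : realType) (X Y : normedModType R) (t : nat -> nat)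
  (z : lp_carrier X Y) : lp_carrier X Y := (z.1, fun j => z.2 (t j)).

Lemma pcD (R : realType) (X Y : normedModType R) t (a : R) (u v : lp_carrier X Y) :
  pc t (a *: u + v) = a *: pc t u + pc t v.
Proof. by rewrite /pc; congr pair. Qed.

Lemma pcB (R : realType) (X Y : normedModType R) t (u v : lp_carrier X Y) :
  pc t (u - v) = pc t u - pc t v.
Proof. by rewrite /pc; congr pair. Qed.

Lemma pcK (R : realType) (X Y : normedModType R) t t' (c2 : cancel t' t)
  (z : lp_carrier X Y) : pc t' (pc t z) = z.
Proof. by case: z => y f; rewrite /pc /=; congr pair; apply/funext => j; rewrite c2. Qed.

Lemma lp_norm_pc (R : realType) (X Y : normedModType R) (p : R) (t t' : nat -> nat)
  (c1 : cancel t t') (c2 : cancel t' t) (z : lp_carrier X Y) :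
  lp_norm p (pc t z) = lp_norm p z.
Proof.
have [L _] := @limn_series_perm R (fun k => `|z.2 k| `^ p) t t' (fun n => powR_ge0 _ _) c1 c2.
rewrite /lp_norm /=; congr (_ `^ _); congr (_ + _); symmetry; exact: L.
Qed.

Lemma lp_mem_pc (R : realType) (X Y : normedModType R) (p : R) (t t' : nat -> nat)
  (c1 : cancel t t') (c2 : cancel t' t) (z : lp_carrier X Y) :
  lp_mem p z -> lp_mem p (pc t z).
Proof.
have [_ [H _]] := @limn_series_perm R (fun k => `|z.2 k| `^ p) t t' (fun n => powR_ge0 _ _) c1 c2.
exact: H.
Qed.

Definition Pm (R : realType) (X Y : normedModType R) (p : R) (t t' : nat -> nat)
  (c1 : cancel t t') (c2 : cancel t' t) (z : Defs.Zp X Y p) : Defs.Zp X Y p :=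
  exist _ (pc t (zval z)) (lp_mem_pc c1 c2 (proj2_sig z)).

Lemma zval_inj (R : realType) (X Y : normedModType R) (p : R) (z w : Defs.Zp X Y p) :
  zval z = zval w -> z = w.
Proof.
case: z => z hz; case: w => w hw /= e; subst w; congr exist; exact: Prop_irrelevance.
Qed.

Lemma PmK (R : realType) (X Y : normedModType R) (p : R) (t t' : nat -> nat)
  (c1 : cancel t t') (c2 : cancel t' t) (z : Defs.Zp X Y p) :
  Pm c2 c1 (Pm c1 c2 z) = z.
Proof. by apply: zval_inj; rewrite /= pcK. Qed.

Lemma zdist_Pm (R : realType) (X Y : normedModType R) (p : R) (t t' : nat -> nat)
  (c1 : cancel t t') (c2 : cancel t' t) (z w : Defs.Zp X Y p) :
  zdist (Pm c1 c2 z) (Pm c1 c2 w) = zdist z w.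
Proof. by rewrite /zdist /= -pcB (lp_norm_pc _ c1 c2). Qed.


Lemma open_zopen (R : realType) (X Y : normedModType R) (p : R) (A : set (Defs.Zp X Y p)) :
  open A -> zopen A.
Proof. move=> h. exact: h. Qed.
Lemma zopen_open (R : realType) (X Y : normedModType R) (p : R) (A : set (Defs.Zp X Y p)) :
  zopen A -> open A.
Proof. move=> h. exact: h. Qed.

Lemma Pm_cont (R : realType) (X Y : normedModType R) (p : R) (t t' : nat -> nat)
  (c1 : cancel t t') (c2 : cancel t' t) : continuous (Pm (X:=X) (Y:=Y) (p:=p) c1 c2).
Proof.
apply/continuousP => A /open_zopen oA.
apply: zopen_open.
move=> z Az.
have [e e0 he] := oA (Pm c1 c2 z) Az.
exists e; first exact: e0.
move=> w hw.
apply: he.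
rewrite zdist_Pm.
exact: hw.
Qed.

Lemma closure_img_sub (T : topologicalType) (f g : T -> T) (E : set T) :
  cancel f g -> cancel g f -> continuous g -> closure (f @` E) `<=` f @` closure E.
Proof.
move=> fg gf gc x cx; exists (g x); last exact: gf.
move=> B nB.
have nB' : nbhs x (g @^-1` B) := gc x B nB.
have [a [[e Ee <-] Ba]] := cx _ nB'.
by exists e; split => //; rewrite -(fg e).
Qed.

Lemma compact_img_closure (T : topologicalType) (f g : T -> T) (E : set T) :
  cancel f g -> cancel g f -> continuous f -> continuous g ->
  compact (closure E) -> compact (closure (f @` E)).
Proof.
move=> fg gf fc gc cE.
apply: (subclosed_compact (@closed_closure _ _)) (closure_img_sub fg gf gc).
apply: continuous_compact => //; exact: continuous_subspaceT.
Qed.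

Lemma zval_Pm (R : realType) (X Y : normedModType R) (p : R) (t t' : nat -> nat)
  (c1 : cancel t t') (c2 : cancel t' t) (z : Defs.Zp X Y p) :
  zval (Pm c1 c2 z) = pc t (zval z).
Proof. reflexivity. Qed.

Lemma lp_norm_Pm (R : realType) (X Y : normedModType R) (p : R) (t t' : nat -> nat)
  (c1 : cancel t t') (c2 : cancel t' t) (z : Defs.Zp X Y p) :
  lp_norm p (zval (Pm c1 c2 z)) = lp_norm p (zval z).
Proof. rewrite zval_Pm; exact: lp_norm_pc c1 c2 _. Qed.

Lemma Pm_J0 (R : realType) (X Y : normedModType R) (p : R) (hp : 1 < p) (t t' : nat -> nat)
  (c1 : cancel t t') (c2 : cancel t' t) (y : Y) :
  Pm c1 c2 (J0 X hp y) = J0 X hp y.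
Proof. apply: zval_inj; reflexivity. Qed.

Lemma Pm_Jk (R : realType) (X Y : normedModType R) (p : R) (hp : 1 < p) (t t' : nat -> nat)
  (c1 : cancel t t') (c2 : cancel t' t) (k : nat) (x : X) :
  Pm c1 c2 (Jk Y hp k x) = Jk Y hp (t' k.-1).+1 x.
Proof.
apply: zval_inj; rewrite zval_Pm /pc /=; congr pair; apply/funext => j.
have -> : (t j == k.-1) = (j == t' k.-1).
  by apply/eqP/eqP => [<-|->]; [rewrite c1|rewrite c2].
reflexivity.
Qed.

Lemma P0_Pm (R : realType) (X Y : normedModType R) (p : R) (t t' : nat -> nat)
  (c1 : cancel t t') (c2 : cancel t' t) (z : Defs.Zp X Y p) :
  P0 (Pm c1 c2 z) = P0 z.
Proof. reflexivity. Qed.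

Lemma conj_I (R : realType) (p : R) (hp : 1 < p) (X Y : normedModType R)
  (t t' : nat -> nat) (c1 : cancel t t') (c2 : cancel t' t) (A B : set nat) :
  (forall j, B j.+1 -> A (t' j).+1) -> B `<=` Npos ->
  forall S, @I_ideal R X Y p hp A S -> @I_ideal R X Y p hp B (Pm c2 c1 \o S \o Pm c1 c2).
Proof.
move=> hBA BN S [[[lin [M hM]] cpt] a0 ak]; split.
- split; first split.
  + move=> a z1 z2 z3 e.
    have e' : zval (Pm c1 c2 z3) = a *: zval (Pm c1 c2 z1) + zval (Pm c1 c2 z2).
      by rewrite !zval_Pm e pcD.
    by rewrite /comp !zval_Pm (lin a _ _ _ e') pcD.
  + exists M => z; rewrite /comp lp_norm_Pm.
    by have := hM (Pm c1 c2 z); rewrite lp_norm_Pm.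
  + have hc := compact_img_closure (f := Pm c2 c1) (g := Pm c1 c2)
      (fun z => PmK c2 c1 z) (fun z => PmK c1 c2 z) (@Pm_cont R X Y p t' t c2 c1) (@Pm_cont R X Y p t t' c1 c2) cpt.
    apply: (subclosed_compact _ hc); first exact: closed_closure.
    apply: closure_subset => _ [z zb <-].
    exists (S (Pm c1 c2 z)); last reflexivity.
    exists (Pm c1 c2 z); last reflexivity.
    change (lp_norm p (zval (Pm c1 c2 z)) <= 1); rewrite lp_norm_Pm; exact: zb.
- have -> : (fun y : Y => P0 ((Pm c2 c1 \o S \o Pm c1 c2) (J0 X hp y))) =
            (fun y : Y => P0 (S (J0 X hp y))).
    by apply/funext => y; rewrite /comp P0_Pm Pm_J0.
  exact: a0.
move=> k Bk; have k0 := BN _ Bk.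
case: k k0 Bk => [//|j] _ Bj.
have -> : (fun x : X => P0 ((Pm c2 c1 \o S \o Pm c1 c2) (Jk Y hp j.+1 x))) =
          (fun x : X => P0 (S (Jk Y hp (t' j).+1 x))).
  by apply/funext => x; rewrite /comp P0_Pm Pm_Jk.
exact: ak (hBA _ Bj).
Qed.

Lemma perm_of_sigma (A B : set nat) :
  A `<=` Npos -> B `<=` Npos ->
  (exists sigma : nat -> nat, set_bij Npos Npos sigma /\ sigma @` A = B) ->
  exists t t' : nat -> nat, [/\ cancel t t', cancel t' t,
     (forall j, A j.+1 -> B (t j).+1) & (forall j, B j.+1 -> A (t' j).+1)].
Proof.
move=> AN BN [sg [[sf sinj ssurj] img]].
have sur : forall j, exists2 k, Npos k & sg k = j.+1.
  move=> j; have [k Nk e] := ssurj j.+1 (ltn0Sn j); by exists k.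
pose si j := s2val (cid2 (sur j)).
have siN j : Npos (si j) := s2valP (cid2 (sur j)).
have sie j : sg (si j) = j.+1 := s2valP' (cid2 (sur j)).
have sgN k : Npos k -> (0 < sg k)%N by move=> Nk; exact: sf k Nk.
have inj k1 k2 : Npos k1 -> Npos k2 -> sg k1 = sg k2 -> k1 = k2.
  by move=> N1 N2 e; apply: sinj => //; rewrite inE.
have pS k : (0 < k)%N -> k.-1.+1 = k by case: k.
exists (fun j => (sg j.+1).-1), (fun j => (si j).-1); split.
- move=> j /=.
  have -> : si (sg j.+1).-1 = j.+1; last by [].
  apply: inj; [exact: siN | exact: ltn0Sn | ].
  by rewrite sie (pS _ (sgN _ (ltn0Sn j))).
- move=> j /=; rewrite (pS _ (siN j)) sie //.
- move=> j Aj; rewrite (pS _ (sgN _ (ltn0Sn j))) -img; by exists j.+1.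
move=> j Bj; rewrite (pS _ (siN j)); move: Bj; rewrite -img => -[a Aa e].
have -> : si j = a; last by [].
by apply: inj; [exact: siN | exact: AN | rewrite sie].
Qed.

Lemma sigma_of_card (A B : set nat) :
  A `<=` Npos -> B `<=` Npos ->
  A #= B -> (Npos `\` A) #= (Npos `\` B) ->
  exists sigma : nat -> nat, set_bij Npos Npos sigma /\ sigma @` A = B.
Proof.
move=> AN BN hAB hC.
have := elimT card_set_bijP hAB; move=> [f fb]; case: fb => ff finj fsurj.
have := elimT card_set_bijP hC; move=> [g gb]; case: gb => gf ginj gsurj.
pose sg k := if pselect (A k) then f k else g k.
have sgA k : A k -> sg k = f k.
  by move=> Ak; rewrite /sg; case: (pselect (A k)).
have sgnA k : ~ A k -> sg k = g k.
  by move=> nAk; rewrite /sg; case: (pselect (A k)).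
exists sg; split; last first.
  apply/seteqP; split.
    by move=> _ [x Ax <-]; rewrite sgA //; exact: ff.
  move=> y By; have [x Ax e] := fsurj y By; exists x => //; by rewrite sgA.
split.
- move=> k Nk /=; have [Ak|Ak] := pselect (A k).
    rewrite sgA //; exact/BN/ff.
  by rewrite sgnA //; have [] := gf k (conj Nk Ak).
- move=> k1 k2 /set_mem N1 /set_mem N2.
  have [A1|A1] := pselect (A k1); have [A2|A2] := pselect (A k2).
  + by rewrite !sgA // => e; apply: finj => //; rewrite inE.
  + rewrite sgA // sgnA // => e.
    have [_ nB] := gf k2 (conj N2 A2); exfalso; apply: nB; rewrite -e; exact: ff.
  + rewrite sgnA // sgA // => e.
    have [_ nB] := gf k1 (conj N1 A1); exfalso; apply: nB; rewrite e; exact: ff.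
  + by rewrite !sgnA // => e; apply: ginj => //; rewrite inE.
- move=> y Ny; have [By|nBy] := pselect (B y).
    have [x Ax e] := fsurj y By; exists x; first exact: AN.
    by rewrite sgA.
  have [x [Nx nAx] e] := gsurj y (conj Ny nBy); exists x => //.
  by rewrite sgnA.
Qed.

Lemma iso_perm (R : realType) (p : R) (hp : 1 < p) (X Y : normedModType R)
  (t t' : nat -> nat) (c1 : cancel t t') (c2 : cancel t' t) (A B : set nat) :
  (forall j, A j.+1 -> B (t j).+1) -> (forall j, B j.+1 -> A (t' j).+1) ->
  A `<=` Npos -> B `<=` Npos ->
  banach_alg_iso (@I_ideal R X Y p hp A) (@I_ideal R X Y p hp B).
Proof.
move=> hAB hBA AN BN.
exists (fun S => Pm c2 c1 \o S \o Pm c1 c2); split.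
- move=> S IS; exact: (conj_I c1 c2 hBA BN IS).
- split.
  + move=> S1 S2 _ _ e; apply/funext => z.
    have := congr1 (fun F => Pm c1 c2 (F (Pm c2 c1 z))) e.
    by rewrite /comp !PmK.
  + move=> T IT; exists (Pm c1 c2 \o T \o Pm c2 c1).
      exact: (conj_I c2 c1 hAB AN IT).
    by apply/funext => z; rewrite /comp !PmK.
- move=> a S1 S2 S3 _ _ _ h z.
  by rewrite /comp !zval_Pm (h (Pm c1 c2 z)) pcD.
- move=> S1 S2 _ _; apply/funext => z; by rewrite /comp PmK.
exists 1; first exact: ltr01.
move=> S _ M; split => hM z.
  rewrite mul1r /comp lp_norm_Pm.
  by have := hM (Pm c1 c2 z); rewrite lp_norm_Pm.
rewrite mul1r.
have := hM (Pm c2 c1 z); rewrite /comp PmK !lp_norm_Pm; exact.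
Qed.

Unset Implicit Arguments.
Set Strict Implicit.

Theorem lemma2p2 (R : realType) (p : R) (hp : 1 < p)
  (X Y : completeNormedModType R) :
  approx_property X ->
  [set S : X -> Y | approx_op S] `<` [set S : X -> Y | compact_op S] ->
  forall A B : set nat,
    set0 `<` A -> A `<` Npos -> set0 `<` B -> B `<` Npos ->
    ((exists sigma : nat -> nat, set_bij Npos Npos sigma /\ sigma @` A = B)
     \/ (A #= B /\ (Npos `\` A) #= (Npos `\` B))) ->
    banach_alg_iso (@I_ideal R X Y p hp A) (@I_ideal R X Y p hp B).
Proof.
move=> _ _ A B _ [AN _] _ [BN _] h.
have hs : exists sigma : nat -> nat, set_bij Npos Npos sigma /\ sigma @` A = B.
  case: h => [//|[h1 h2]]; exact: sigma_of_card.
have [t [t' [c1 c2 hAB hBA]]] := perm_of_sigma AN BN hs.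
exact: (@iso_perm R p hp X Y t t' c1 c2 A B hAB hBA AN BN).
Qed.
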